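(* In the cone setting of the context, for each $\ell\in\mathcal C'_{\mathbb C}$ we have $\|\ell\|'\le\sqrt2\,|\ell(e)|$, where $\|\ell\|'=\sup_{\|h\|\le1}|\ell(h)|$ is the dual norm on $\mathcal B'_{\mathbb C}$.
   Context: Cone setting. $V$ is a real topological vector space, $\mathcal S\subset V'$ a set of linear functionals such that $\ell(x)=0$ for all $\ell\in\mathcal S$ implies $x=0$, $C_{\mathbb R}=\{h\in V\setminus\{0\}:\ell(h)\ge0\ \forall\ell\in\mathcal S\}$, and $e\in C_{\mathbb R}$ is such that for every $h\in V$ some $\lambda\ge0$ has $\lambda e-h\in C_{\mathbb R}$. Norm $\|h\|=\inf\{\lambda\ge0:\ell(\lambda e\pm h)\ge0\ \forall\ell\in\mathcal S\}$; $\mathcal B_{\mathbb R}$ the completion of $V$; $\mathcal C_{\mathbb R}=\{h\in\mathcal B_{\mathbb R}\setminus\{0\}:\ell(h)\ge0\ \forall\ell\in\mathcal S\}$. $\mathcal S_*$ is the weak-$*$ closure of the convex hull of $\{\lambda\ell:\lambda>0,\ell\in\mathcal S\}$, and there exist $m\in\mathcal S_*$, $\kappa\in(0,1)$ with $m(e)=1$ and $m(h)\ge\kappa\|h\|$ on $\mathcal C_{\mathbb R}$. $\mathcal B_{\mathbb C}$ is the complexification of $\mathcal B_{\mathbb R}$ (elements $x+iy$, norm $\sup_\theta(\|\Re(e^{i\theta}(x+iy))\|^2+\|\Im(e^{i\theta}(x+iy))\|^2)^{1/2}$), real functionals extended complex-linearly. $\mathcal C_{\mathbb C}=\{z(x+iy):z\in\mathbb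 C\setminus\{0\},x,y\in\mathcal C_{\mathbb R}\}$ and $\mathcal C'_{\mathbb C}=\{\ell\in\mathcal B'_{\mathbb C}:\ell(h)\ne0\ \forall h\in\mathcal C_{\mathbb C}\}$. *)

(* Defs.v *)
From HB Require Import structures.
From mathcomp Require Import all_boot all_order all_algebra.
From mathcomp Require Import all_classical all_reals all_analysis.
From mathcomp Require Import complex.
Set Implicit Arguments. Unset Strict Implicit. Unset Printing Implicit Defensive.
Import Order.TTheory GRing.Theory Num.Theory.
Local Open Scope classical_set_scope.
Local Open Scope ring_scope.

Definition rlinear (R : realType) (V : lmodType R) (l : V -> R) : Prop :=
  forall (a : R) (x y : V), l (a *: x + y) = a * l x + l y.

Definition in_dual (R : realType) (V : topologicalLmodType R) (l : V -> R) : Prop :=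
  rlinear l /\ continuous (l : V -> R^o).

Definition separating (R : realType) (V : lmodType R) (S : set (V -> R)) : Prop :=
  forall x : V, (forall l, S l -> l x = 0) -> x = 0.

Definition coneV (R : realType) (V : lmodType R) (S : set (V -> R)) : set V :=
  [set h | h <> 0 /\ forall l, S l -> 0 <= l h].

Definition order_unit (R : realType) (V : lmodType R) (S : set (V -> R)) (e : V) : Prop :=
  coneV S e /\ forall h : V, exists lam : R, 0 <= lam /\ coneV S (lam *: e - h).

Definition gauge (R : realType) (V : lmodType R) (S : set (V -> R)) (e : V) (h : V) : R :=
  inf [set lam : R | 0 <= lam /\
         forall l, S l -> 0 <= l (lam *: e + h) /\ 0 <= l (lam *: e - h)].

Definition is_completion (R : realType) (V : lmodType R) (S : set (V -> R)) (e : V)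
    (B : completeNormedModType R) (iota : V -> B) : Prop :=
  [/\ forall (a : R) (x y : V), iota (a *: x + y) = a *: iota x + iota y,
      forall h : V, `|iota h| = gauge S e h
    & dense (range iota)].

Definition extends (R : realType) (V : lmodType R) (B : normedModType R)
    (iota : V -> B) (l : V -> R) (L : B -> R) : Prop :=
  continuous (L : B -> R^o) /\ forall h : V, L (iota h) = l h.

Definition coneB (R : realType) (V : lmodType R) (S : set (V -> R))
    (B : normedModType R) (iota : V -> B) : set B :=
  [set h | h <> 0 /\ forall l L, S l -> extends iota l L -> 0 <= L h].

(* S_* : weak-* closure in V' of the convex hull of {lambda l : lambda > 0, l in S}.
   A basic weak-* neighbourhood of m is given by finitely many points h_i and eps > 0;
   elements of the convex hull are the combinations sum_j c_j l_j with c_j > 0, l_j in S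
   (at least one term). *)
Definition S_star (R : realType) (V : topologicalLmodType R) (S : set (V -> R))
    (m : V -> R) : Prop :=
  in_dual m /\
  forall (n : nat) (h : 'I_n -> V) (eps : R), 0 < eps ->
    exists (k : nat) (c : 'I_k.+1 -> R) (ls : 'I_k.+1 -> V -> R),
      (forall j, 0 < c j /\ S (ls j)) /\
      forall i, `| \sum_(j < k.+1) c j * ls j (h i) - m (h i) | < eps.

(* ---------- Complexification B_C = B + iB, represented as B * B ---------- *)

Definition cadd (R : realType) (B : normedModType R) (w w' : B * B) : B * B :=
  (w.1 + w'.1, w.2 + w'.2).

(* (a + i b)(x + i y) = (a x - b y) + i (b x + a y) *)
Definition cscale (R : realType) (B : normedModType R) (z : R[i]) (w : B * B) : B * B :=
  ((complex.Re z : R) *: w.1 - (complex.Im z : R) *: w.2, (complex.Im z : R) *: w.1 + (complex.Re z : R) *: w.2).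

(* ||x+iy|| = sup_theta (||Re(e^{i theta}(x+iy))||^2 + ||Im(e^{i theta}(x+iy))||^2)^{1/2} *)
Definition cnorm (R : realType) (B : normedModType R) (w : B * B) : R :=
  sup [set Num.sqrt (`|cos t *: w.1 - sin t *: w.2| ^+ 2 +
                     `|sin t *: w.1 + cos t *: w.2| ^+ 2) | t in [set: R]].

Definition cmod (R : realType) (z : R[i]) : R := Normc.normc z.

Definition clinear (R : realType) (B : normedModType R) (f : B * B -> R[i]) : Prop :=
  forall (z : R[i]) (w w' : B * B), f (cadd (cscale z w) w') = z * f w + f w'.

(* continuity of a linear functional on the normed space B_C, i.e. boundedness *)
Definition cbounded (R : realType) (B : normedModType R) (f : B * B -> R[i]) : Prop :=
  exists M : R, forall w : B * B, cmod (f w) <= M * cnorm w.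

Definition in_cdual (R : realType) (B : normedModType R) (f : B * B -> R[i]) : Prop :=
  clinear f /\ cbounded f.

Definition dual_norm (R : realType) (B : normedModType R) (f : B * B -> R[i]) : R :=
  sup [set cmod (f w) | w in [set w : B * B | cnorm w <= 1]].

Definition coneC (R : realType) (V : lmodType R) (S : set (V -> R))
    (B : normedModType R) (iota : V -> B) : set (B * B) :=
  [set w | exists (z : R[i]) (x y : B),
     [/\ z <> 0, coneB S iota x, coneB S iota y & w = cscale z (x, y)]].

Definition dual_coneC (R : realType) (V : lmodType R) (S : set (V -> R))
    (B : normedModType R) (iota : V -> B) : set (B * B -> R[i]) :=
  [set f | in_cdual f /\ forall w, coneC S iota w -> f w <> 0].

(* Main.v *)
Require Import Defs.
From HB Require Import structures.
From mathcomp Require Import all_boot all_order all_algebra.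
From mathcomp Require Import all_classical all_reals all_analysis.
From mathcomp Require Import complex.
From mathcomp Require Import ring lra.
Import Order.TTheory GRing.Theory Num.Theory.
Local Open Scope classical_set_scope.
Local Open Scope ring_scope.

Lemma rlin_facts (R : realType) (V : lmodType R) (l : V -> R) : rlinear l ->
  [/\ l 0 = 0, (forall x, l (- x) = - l x), (forall x y, l (x + y) = l x + l y)
    & (forall (a : R) x, l (a *: x) = a * l x)].
Proof.
move=> hl.
have l0 : l 0 = 0.
  have := hl 1 0 0; rewrite scale1r addr0 mul1r => h.
  by apply: (addrI (l 0)); rewrite addr0 -h.
have lZ : forall (a : R) x, l (a *: x) = a * l x.
  by move=> a x; have := hl a x 0; rewrite !addr0 l0 addr0.
split => //.
- by move=> x; rewrite -scaleN1r lZ mulN1r.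
- by move=> x y; have := hl 1 x y; rewrite scale1r mul1r.
Qed.

Section CplxFacts.
Lemma cReD (R : realType) (x y : R[i]) : complex.Re (x + y) = complex.Re x + complex.Re y.
Proof. by case: x; case: y. Qed.
Lemma cImD (R : realType) (x y : R[i]) : complex.Im (x + y) = complex.Im x + complex.Im y.
Proof. by case: x; case: y. Qed.
Lemma cReM (R : realType) (x y : R[i]) :
  complex.Re (x * y) = complex.Re x * complex.Re y - complex.Im x * complex.Im y.
Proof. by case: x; case: y. Qed.
Lemma cImM (R : realType) (x y : R[i]) :
  complex.Im (x * y) = complex.Re x * complex.Im y + complex.Im x * complex.Re y.
Proof. by case: x => a b; case: y => c d /=; rewrite addrC. Qed.
Lemma cReC (R : realType) (s : R) : complex.Re (s%:C)%C = s. Proof. by []. Qed.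
Lemma cImC (R : realType) (s : R) : complex.Im (s%:C)%C = 0. Proof. by []. Qed.
Lemma cRei (R : realType) : complex.Re ('i%C : R[i]) = 0. Proof. by []. Qed.
Lemma cImi (R : realType) : complex.Im ('i%C : R[i]) = 1. Proof. by []. Qed.
Lemma cRe0 (R : realType) : complex.Re (0 : R[i]) = 0. Proof. by []. Qed.
Lemma cIm0 (R : realType) : complex.Im (0 : R[i]) = 0. Proof. by []. Qed.
Lemma cplx_eq0 (R : realType) (z : R[i]) : complex.Re z = 0 -> complex.Im z = 0 -> z = 0.
Proof. by case: z => a b /= -> ->. Qed.
Lemma cmodE (R : realType) (z : R[i]) :
  cmod z = Num.sqrt (complex.Re z ^+ 2 + complex.Im z ^+ 2).
Proof. by case: z. Qed.
Lemma cRe_form (R : realType) (z w : R[i]) (s : R) :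
  complex.Re (z + 'i%C * ((s%:C)%C * w)) = complex.Re z - s * complex.Im w.
Proof. by case: z => a b; case: w => c d /=; ring. Qed.
Lemma cIm_form (R : realType) (z w : R[i]) (s : R) :
  complex.Im (z + 'i%C * ((s%:C)%C * w)) = complex.Im z + s * complex.Re w.
Proof. by case: z => a b; case: w => c d /=; ring. Qed.
End CplxFacts.

Lemma cnorm_elt_real (R : realType) (B : normedModType R) (k : B) (t : R) :
  Num.sqrt (`|cos t *: k - sin t *: (0 : B)| ^+ 2 + `|sin t *: k + cos t *: (0 : B)| ^+ 2) = `|k|.
Proof.
rewrite !scaler0 subr0 addr0 !normrZ !exprMn !real_normK ?num_real //. 
have -> : cos t ^+ 2 * `|k| ^+ 2 + sin t ^+ 2 * `|k| ^+ 2 = `|k| ^+ 2.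
  by rewrite -[RHS]mul1r -(cos2Dsin2 t); ring.
by rewrite sqrtr_sqr normr_id.
Qed.

Lemma cnorm_real (R : realType) (B : normedModType R) (k : B) : cnorm (k, 0) = `|k|.
Proof.
rewrite /Defs.cnorm /=.
have -> : [set Num.sqrt (`|cos t *: k - sin t *: (0 : B)| ^+ 2 +
              `|sin t *: k + cos t *: (0 : B)| ^+ 2) | t in [set: R]] = [set `|k|].
  apply/seteqP; split => x /=.
  - by case=> t _ <-; rewrite cnorm_elt_real.
  - by move=> ->; exists 0 => //; rewrite cnorm_elt_real.
by rewrite sup1.
Qed.

Lemma sqrt_sum_le (R : realType) (a b : R) : 0 <= a -> 0 <= b ->
  Num.sqrt (a ^+ 2 + b ^+ 2) <= a + b.
Proof.
move=> a0 b0; rewrite -(ger0_norm (addr_ge0 a0 b0)) -sqrtr_sqr ler_sqrt ?sqr_ge0 //.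
nra.
Qed.

Lemma cnorm_ge (R : realType) (B : normedModType R) (x y : B) :
  Num.sqrt (`|x| ^+ 2 + `|y| ^+ 2) <= cnorm (x, y).
Proof.
rewrite /Defs.cnorm /=.
have bnd : forall t : R, `|cos t *: x - sin t *: y| <= `|x| + `|y| /\
                         `|sin t *: x + cos t *: y| <= `|x| + `|y|.
  move=> t; have c1 := cos_max t; have s1 := sin_max t.
  have hx := normr_ge0 x; have hy := normr_ge0 y.
  have hc := normr_ge0 (cos t); have hs := normr_ge0 (sin t).
  split.
  - apply: (le_trans (ler_normB _ _)); rewrite !normrZ; nra.
  - apply: (le_trans (ler_normD _ _)); rewrite !normrZ; nra.
apply: ub_le_sup.
  exists (2 * (`|x| + `|y|)) => z [t _ <-].
  case: (bnd t) => h1 h2.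
  have := @sqrt_sum_le R _ _ (normr_ge0 (cos t *: x - sin t *: y)) (normr_ge0 (sin t *: x + cos t *: y)); lra.
exists 0 => //; by rewrite cos0 sin0 !scale1r !scale0r subr0 add0r.
Qed.

Theorem lemma5p5 (R : realType) (V : topologicalLmodType R) (S : set (V -> R)) (e : V)
    (B : completeNormedModType R) (iota : V -> B) (m : V -> R) (kappa : R)
    (HS : forall l, S l -> in_dual l)
    (Hsep : separating S)
    (He : order_unit S e)
    (HB : is_completion S e iota)
    (Hm : S_star S m)
    (Hme : m e = 1)
    (Hkappa : 0 < kappa < 1)
    (HmC : forall L, extends iota m L ->
             forall h, coneB S iota h -> kappa * `|h| <= L h)
    (l : B * B -> R[i]) (Hl : dual_coneC S iota l) :
  dual_norm l <= Num.sqrt 2 * cmod (l (iota e, 0)).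
Proof.
move: (Hl) => [[Hlin [M HM]] HlC].
case: HB => Hiota Hnorm Hdense.
have iota0 : iota 0 = 0.
  have := Hiota 1 0 0; rewrite !scale1r addr0 => h.
  by apply: (addrI (iota 0)); rewrite addr0 -h.
have iotaZ : forall (a : R) x, iota (a *: x) = a *: iota x.
  by move=> a x; have := Hiota a x 0; rewrite !addr0 iota0 addr0.
have iotaD : forall x y, iota (x + y) = iota x + iota y.
  by move=> x y; have := Hiota 1 x y; rewrite !scale1r.
have l0 : l (0, 0) = 0.
  have := Hlin 1 (0, 0) (0, 0).
  rewrite /Defs.cadd /Defs.cscale /= !scaler0 !subr0 !addr0 mul1r => h.
  by apply: (addrI (l (0, 0))); rewrite addr0 -h.
pose f x := l (iota x, 0).
have fL : forall (s : R) x y, f (s *: x + y) = (s%:C)%C * f x + f y.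
  move=> s x y; rewrite /f -Hlin; congr l.
  by rewrite /Defs.cadd /Defs.cscale /= iotaD iotaZ !scaler0 scale0r subr0 !addr0.
have f0 : f 0 = 0 by rewrite /f iota0 l0.
have fZ : forall (s : R) x, f (s *: x) = (s%:C)%C * f x.
  by move=> s x; have := fL s x 0; rewrite !addr0 f0 addr0.
have fxy : forall x y, l (iota x, iota y) = f x + 'i%C * f y.
  move=> x y; rewrite addrC /f -Hlin; congr l.
  by rewrite /Defs.cadd /Defs.cscale /= !scale0r !scale1r ?scaler0 ?subr0 ?sub0r ?oppr0 !addr0 ?add0r.
have LF : forall k, S k -> [/\ k 0 = 0, (forall x, k (- x) = - k x),
    (forall x y, k (x + y) = k x + k y) & (forall (a : R) x, k (a *: x) = a * k x)].
  by move=> k Sk; apply: rlin_facts; case: (HS k Sk).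
case: (He) => [[e0 epos] Hu].
pose GS v := [set lam : R | 0 <= lam /\ forall l, S l -> 0 <= l (lam *: e + v) /\ 0 <= l (lam *: e - v)].
have GSne : forall v, GS v !=set0.
  move=> v; case: (Hu v) => lam1 [lam1ge0 [_ c1]]; case: (Hu (- v)) => lam2 [lam2ge0 [_ c2]].
  have m1 : lam1 <= Num.max lam1 lam2 by rewrite le_max lexx.
  have m2 : lam2 <= Num.max lam1 lam2 by rewrite le_max lexx orbT.
  exists (Num.max lam1 lam2); split; first by rewrite le_max lam1ge0.
  move=> k Sk; case: (LF k Sk) => k0 kN kD kZ.
  have := c1 k Sk; have := c2 k Sk; have := epos k Sk.
  rewrite !kD !kN !kZ opprK => h1 h2 h3.
  have d1 : 0 <= Num.max lam1 lam2 - lam1 by rewrite subr_ge0.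
  have d2 : 0 <= Num.max lam1 lam2 - lam2 by rewrite subr_ge0.
  have := mulr_ge0 d2 h1; have := mulr_ge0 d1 h1.
  by split; nra.
have GSlt : forall v r, gauge S e v < r -> exists2 lam, GS v lam & lam < r.
  by move=> v r; apply: inf_lt; apply: GSne.
have coneVB : forall x, coneV S x -> coneB S iota (iota x).
  move=> x [x0 xpos]; split; last first.
    by move=> k K Sk [_ KE]; rewrite KE; apply: xpos.
  move=> ix0; apply: x0; apply: Hsep => k Sk.
  apply/eqP; rewrite eq_le xpos // andbT.
  apply/ler_addgt0Pr => eps eps0; rewrite add0r.
  have ke0 := epos k Sk.
  have gx : gauge S e x < eps / (k e + 1).
    by rewrite -Hnorm ix0 normr0 divr_gt0 // ltr_pwDr.
  case: (GSlt _ _ gx) => lam [lam0 /(_ k Sk) [h1 h2]] hlt.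
  case: (LF k Sk) => k0 kN kD kZ; rewrite !kD !kN !kZ in h1 h2.
  have h3 : eps / (k e + 1) * (k e + 1) = eps by rewrite divfK // gt_eqF // ltr_pwDr.
  have := mulr_ge0 (ltW (divr_gt0 eps0 (ltr_pwDr ltr01 ke0))) ke0.
  nra.
have G : forall x y, coneV S x -> coneV S y -> f x + 'i%C * f y <> 0.
  move=> x y cx cy; rewrite -fxy; apply: HlC.
  exists 1, (iota x), (iota y); split.
  - by apply/eqP; rewrite oner_neq0.
  - exact: coneVB.
  - exact: coneVB.
  - by rewrite /Defs.cscale /= !scale1r !scale0r subr0 add0r.
have coneZ : forall (s : R) y, 0 < s -> coneV S y -> coneV S (s *: y).
  move=> s y s0 [y0 ypos]; split.
    by move/eqP; rewrite scaler_eq0 (gt_eqF s0) /= => /eqP.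
  by move=> k Sk; case: (LF k Sk) => _ _ _ ->; apply: mulr_ge0; [exact: ltW | exact: ypos].
have Gs : forall x y (s : R), 0 < s -> coneV S x -> coneV S y ->
    f x + 'i%C * ((s%:C)%C * f y) <> 0.
  by move=> x y s s0 cx cy; rewrite -fZ; apply: G => //; apply: coneZ.
have ReIm_f : forall (s t : R) x y,
    complex.Re (f (s *: x + t *: y)) = s * complex.Re (f x) + t * complex.Re (f y) /\
    complex.Im (f (s *: x + t *: y)) = s * complex.Im (f x) + t * complex.Im (f y).
  move=> s t x y; rewrite fL fZ cReD cImD !cReM !cImM !cReC !cImC.
  by split; ring.
have Pos : forall p q, (forall k, S k -> 0 <= k p) -> (forall k, S k -> 0 <= k q) ->
    0 <= complex.Re (f p) * complex.Re (f q) + complex.Im (f p) * complex.Im (f q).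
  move=> p q pp pq.
  have [->|p0] := eqVneq p 0; first by rewrite f0 cRe0 cIm0 !mul0r addr0.
  have [->|q0] := eqVneq q 0; first by rewrite f0 cRe0 cIm0 !mulr0 addr0.
  have cp : coneV S p by split => //; apply/eqP.
  have cq : coneV S q by split => //; apply/eqP.
  set A1 := complex.Re (f p); set A2 := complex.Im (f p).
  set B1 := complex.Re (f q); set B2 := complex.Im (f q).
  rewrite leNgt; apply/negP => HD.
  have HN : 0 < B1 ^+ 2 + B2 ^+ 2.
    rewrite ltNge; apply/negP => HN.
    have b1 : B1 = 0 by nra.
    have b2 : B2 = 0 by nra.
    apply: (G q q cq cq).
    have fq0 : f q = 0 by apply: cplx_eq0.
    by rewrite fq0 mulr0 addr0.
  have ND : 0 < B1 ^+ 2 + B2 ^+ 2 - (A1 * B1 + A2 * B2) by lra.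
  pose u := (B1 ^+ 2 + B2 ^+ 2) / (B1 ^+ 2 + B2 ^+ 2 - (A1 * B1 + A2 * B2)).
  pose t := - (A1 * B1 + A2 * B2) / (B1 ^+ 2 + B2 ^+ 2 - (A1 * B1 + A2 * B2)).
  have u0 : 0 < u by rewrite /u divr_gt0.
  have t0 : 0 < t by rewrite /t divr_gt0 // oppr_gt0.
  have cp' : coneV S (u *: p + t *: q).
    split.
    - move=> p'0; move/eqP: p0; apply; apply: Hsep => k Sk.
      have := congr1 k p'0; case: (LF k Sk) => k0 _ kD kZ; rewrite kD !kZ k0 => h.
      have h1 := pp k Sk; have h2 := pq k Sk.
      have := mulr_ge0 (ltW t0) h2; have := mulr_ge0 (ltW u0) h1.
      nra.
    - move=> k Sk; case: (LF k Sk) => k0 _ kD kZ; rewrite kD !kZ; apply: addr_ge0; apply: mulr_ge0; by [exact: ltW | exact: pp | exact: pq].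
  have [P1e P2e] := ReIm_f u t p q.
  set P1 := complex.Re (f (u *: p + t *: q)) in P1e *.
  set P2 := complex.Im (f (u *: p + t *: q)) in P2e *.
  rewrite -/A1 -/A2 -/B1 -/B2 in P1e P2e.
  have orth : P1 * B1 + P2 * B2 = 0.
    rewrite P1e P2e /u /t; field.
    by rewrite gt_eqF.
  pose c := P2 * B1 - P1 * B2.
  have P1N : P1 * (B1 ^+ 2 + B2 ^+ 2) + c * B2 = B1 * (P1 * B1 + P2 * B2) by rewrite /c; ring.
  have P2N : P2 * (B1 ^+ 2 + B2 ^+ 2) - c * B1 = B2 * (P1 * B1 + P2 * B2) by rewrite /c; ring.
  rewrite orth mulr0 in P1N P2N.
  have Nn0 : B1 ^+ 2 + B2 ^+ 2 != 0 by rewrite gt_eqF.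
  have P1E : P1 = - c * B2 / (B1 ^+ 2 + B2 ^+ 2).
    by apply: (mulIf Nn0); rewrite divfK //; lra.
  have P2E : P2 = c * B1 / (B1 ^+ 2 + B2 ^+ 2).
    by apply: (mulIf Nn0); rewrite divfK //; lra.
  case: (ltgtP c 0) => hc.
  - apply: (Gs (u *: p + t *: q) q (- c / (B1 ^+ 2 + B2 ^+ 2)) _ cp' cq).
      by rewrite divr_gt0 // oppr_gt0.
    apply: cplx_eq0; [rewrite cRe_form -/P1 -/B2 P1E | rewrite cIm_form -/P2 -/B1 P2E].
      by field; rewrite gt_eqF.
    by field; rewrite gt_eqF.
  - apply: (Gs q (u *: p + t *: q) ((B1 ^+ 2 + B2 ^+ 2) / c) _ cq cp').
      by rewrite divr_gt0.
    apply: cplx_eq0; [rewrite cRe_form -/P2 -/B1 P2E | rewrite cIm_form -/P1 -/B2 P1E].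
      by field; apply/andP; split; [exact: Nn0 | rewrite (gt_eqF hc)].
    by field; apply/andP; split; [exact: Nn0 | rewrite (gt_eqF hc)].
  - apply: (G _ _ cp' cp').
    have fz : f (u *: p + t *: q) = 0.
      by apply: cplx_eq0; [rewrite -/P1 P1E hc | rewrite -/P2 P2E hc]; rewrite ?oppr0 !mul0r.
    by rewrite fz mulr0 addr0.
have Bound1 : forall v, gauge S e v < 1 ->
    complex.Re (f v) ^+ 2 + complex.Im (f v) ^+ 2 <=
    complex.Re (f e) ^+ 2 + complex.Im (f e) ^+ 2.
  move=> v gv; case: (GSlt v 1 gv) => lam [lam0 Hlam] hl1.
  have c1 : forall k, S k -> 0 <= k (1 *: e + 1 *: v).
    move=> k Sk; case: (Hlam k Sk) => h1 h2; have h3 := epos k Sk.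
    case: (LF k Sk) => k0 kN kD kZ; rewrite !kD !kN !kZ in h1 h2 *.
    have d : 0 <= 1 - lam by rewrite subr_ge0 ltW.
    have := mulr_ge0 d h3. nra.
  have c2 : forall k, S k -> 0 <= k (1 *: e + (-1) *: v).
    move=> k Sk; case: (Hlam k Sk) => h1 h2; have h3 := epos k Sk.
    case: (LF k Sk) => k0 kN kD kZ; rewrite !kD !kN !kZ in h1 h2 *.
    nra.
  have := Pos _ _ c1 c2.
  have [-> ->] := ReIm_f 1 1 e v.
  have [-> ->] := ReIm_f 1 (-1) e v.
  nra.
have Bound2' : forall v (lam : R), `|iota v| < lam -> cmod (f v) <= lam * cmod (f e).
  move=> v lam hl.
  have lam0 : 0 < lam by apply: le_lt_trans hl.
  have gw : gauge S e (lam^-1 *: v) < 1.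
    rewrite -Hnorm iotaZ normrZ ger0_norm ?invr_ge0 ?ltW //.
    by rewrite mulrC ltr_pdivrMr // mul1r.
  have := Bound1 _ gw; rewrite fZ !cReM !cImM !cReC !cImC.
  set r1 := complex.Re (f v); set r2 := complex.Im (f v).
  set a1 := complex.Re (f e); set a2 := complex.Im (f e).
  have -> : (lam^-1 * r1 - 0 * r2) ^+ 2 + (lam^-1 * r2 + 0 * r1) ^+ 2 =
            lam^-1 ^+ 2 * (r1 ^+ 2 + r2 ^+ 2) by ring.
  move=> h.
  have hX : r1 ^+ 2 + r2 ^+ 2 <= lam ^+ 2 * (a1 ^+ 2 + a2 ^+ 2).
    have -> : r1 ^+ 2 + r2 ^+ 2 = lam ^+ 2 * (lam^-1 ^+ 2 * (r1 ^+ 2 + r2 ^+ 2)).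
      by rewrite mulrA -exprMn mulfV ?gt_eqF // expr1n mul1r.
    by rewrite ler_wpM2l // sqr_ge0.
  rewrite !cmodE -/r1 -/r2 -/a1 -/a2.
  rewrite -(ger0_norm (ltW lam0)) -sqrtr_sqr -sqrtrM ?sqr_ge0 //.
  by rewrite ler_sqrt // mulr_ge0 // ?sqr_ge0 // addr_ge0 // sqr_ge0.
have Bound2 : forall v, cmod (f v) <= `|iota v| * cmod (f e).
  move=> v.
  have c0 : 0 <= cmod (f e) by rewrite cmodE sqrtr_ge0.
  have [ce0|cpos] := eqVneq (cmod (f e)) 0.
    have := Bound2' v (`|iota v| + 1); rewrite ce0 !mulr0; apply.
    by rewrite ltrDl.
  have cp : 0 < cmod (f e) by rewrite lt_def cpos c0.
  rewrite -ler_pdivrMr //; apply/unstable.ler_gtP => z hz.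
  by rewrite ler_pdivrMr //; apply: Bound2'.
have lxy : forall x y : B, l (x, y) = l (x, 0) + 'i%C * l (y, 0).
  move=> x y; rewrite addrC -Hlin; congr l.
  by rewrite /Defs.cadd /Defs.cscale /= !scale0r !scale1r ?scaler0 ?subr0 ?sub0r ?oppr0 !addr0 ?add0r.
have lsub : forall h h' : B, l (h, 0) = l (h', 0) + l (h - h', 0).
  move=> h h'; rewrite [RHS]addrC; have := Hlin 1 (h - h', 0) (h', 0); rewrite mul1r => <-; congr l.
  by rewrite /Defs.cadd /Defs.cscale /= !scale1r !scale0r ?scaler0 ?subr0 ?addr0 subrK.
have c0 : 0 <= cmod (f e) by rewrite cmodE sqrtr_ge0.
have Bound3 : forall h : B, cmod (l (h, 0)) <= `|h| * cmod (f e).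
  move=> h; set c := cmod (f e) in c0 *.
  apply/ler_addgt0Pr => eps eps0.
  have hden : 0 < c + `|M| + 1 by have := normr_ge0 M; lra.
  pose d := eps / (c + `|M| + 1).
  have dpos : 0 < d by rewrite /d divr_gt0.
  have dE : d * (c + `|M| + 1) = eps by rewrite /d divfK // gt_eqF.
  have [z [hz [v _ hv]]] : (ball h d `&` range iota) !=set0.
    by apply: Hdense; [exists h; apply: ballxx | exact: ball_open].
  subst z; rewrite -ball_normE /ball_ /= in hz.
  rewrite (lsub h (iota v)).
  rewrite /cmod.
  apply: le_trans (le_normcD _ _) _.
  have h1 : Normc.normc (l (iota v, 0)) <= `|iota v| * c := Bound2 v.
  have h2 : Normc.normc (l (h - iota v, 0)) <= M * `|h - iota v|.
    by have := HM (h - iota v, 0); rewrite cnorm_real.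
  have h3 : `|iota v| <= `|h| + `|h - iota v|.
    by have := ler_normB h (h - iota v); rewrite opprB addrC subrK.
  have h4 : M * `|h - iota v| <= `|M| * `|h - iota v| by rewrite ler_wpM2r // ler_norm.
  have h5 := normr_ge0 (h - iota v); have h6 := normr_ge0 M.
  have h7 : `|iota v| * c <= (`|h| + `|h - iota v|) * c by rewrite ler_wpM2r.
  nra.
have ni : cmod ('i%C : R[i]) = 1.
  by rewrite cmodE cRei cImi expr0n /= add0r expr1n sqrtr1.
rewrite /dual_norm; apply: ge_sup.
  exists (cmod (l (0, 0))); exists (0, 0) => //=.
  by rewrite cnorm_real normr0.
move=> y [[x1 x2] /= hw <-].
rewrite lxy.
have hn : `|x1| + `|x2| <= Num.sqrt 2 * Num.sqrt (`|x1| ^+ 2 + `|x2| ^+ 2).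
  rewrite -sqrtrM ?ler0n // -(ger0_norm (addr_ge0 (normr_ge0 x1) (normr_ge0 x2))).
  rewrite -sqrtr_sqr ler_sqrt; last by rewrite mulr_ge0 ?ler0n // addr_ge0 // sqr_ge0.
  have := sqr_ge0 (`|x1| - `|x2|); rewrite !expr2; nra.
have hc := @cnorm_ge R B x1 x2.
have hs : `|x1| + `|x2| <= Num.sqrt 2.
  apply: (le_trans hn); rewrite -[leRHS]mulr1 ler_wpM2l ?sqrtr_ge0 //.
  by apply: (le_trans hc).
have b1 := Bound3 x1; have b2 := Bound3 x2.
rewrite /cmod in b1 b2 ni c0 *.
apply: le_trans (le_normcD _ _) _.
rewrite Normc.normcM ni mul1r.
have := ler_wpM2r c0 hs.
nra.
Qed.
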